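(* Let $q$ be a prime power, let $m, c, h, M$ be positive integers with $c < \frac{m-1}{m}M$, and let $r : \mathbb{F}_q \to \mathbb{F}_q$ be a function. Suppose $F_1(X), \ldots, F_m(X) \in \mathbb{F}_q[X]$ satisfy $\deg(F_i) < cq$ and are all $r$-twisted $(h,M)$-pseudopolynomials. Let $k$ be an integer with $$k > \frac{M}{(m-1)M - mc}\cdot (h+1).$$ Then there exist $k$-pseudopolynomials $A_1(X), \ldots, A_m(X) \in \mathbb{F}_q[X]$ with $\deg(A_i) < Mq$, not all zero, such that $$\sum_{i=1}^m A_i(X) F_i(X) = 0.$$
   Context: For $A(X) \in \mathbb{F}_q[X]$, $A^{[\ell]}(X)$ is the $\ell$-th Hasse derivative (the coefficient of $Z^\ell$ in $A(X+Z)$ expanded in powers of $Z$). With $\Lambda(X) = X^q - X$, the $\ell$-th pseudoderivative is $A_{\langle \ell \rangle}(X) = A^{[\ell]}(X) \bmod \Lambda(X)$. The pseudodegree is $\mathsf{pdeg}(A) = \max_{\ell \geq 0}\deg(A_{\langle\ell\rangle})$, and $A$ is a $k$-pseudopolynomial if $\mathsf{pdeg}(A) \leq k$. Given $r : \mathbb{F}_q \to \mathbb{F}_q$, a polynomial $F(X)$ is an $r$-twisted $(h,M)$-pseudopolynomial if for every $\ell$ with $0 \leq \ell < M$ there is $U_\ell(X) \in \mathbb{F}_q[X]$ of degree at most $h$ with $F^{[\ell]}(\alpha) = r(\alpha)\cdot U_\ell(\alpha)$ for all $\alpha \in \mathbb{F}_q$. *)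

(* Defs.v *)
From HB Require Import structures.
From mathcomp Require Import all_boot all_order all_algebra all_field.
Set Implicit Arguments. Unset Strict Implicit. Unset Printing Implicit Defensive.
Import Order.TTheory GRing.Theory Num.Theory.
Local Open Scope ring_scope.

(* F is a finite field; q = #|F| is a prime power automatically. *)

(* l-th Hasse derivative: coefficient of Z^l in A(X+Z) = \sum_i 'C(l+i,l) a_{l+i} X^i *)
Definition hasse (F : finFieldType) (l : nat) (A : {poly F}) : {poly F} :=
  nderivn l A.

Definition Lam (F : finFieldType) : {poly F} := 'X^#|F| - 'X.

Definition pseudoderiv (F : finFieldType) (l : nat) (A : {poly F}) : {poly F} :=
  hasse l A %% Lam F.

(* A is a k-pseudopolynomial: pdeg(A) = max_l deg(A_<l>) <= k
   (deg 0 = -oo, i.e. size <= k+1 expresses deg <= k). *)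
Definition is_pseudopoly (F : finFieldType) (k : nat) (A : {poly F}) : Prop :=
  forall l : nat, (size (pseudoderiv l A) <= k.+1)%N.

Definition twisted_pseudopoly (F : finFieldType) (r : F -> F) (h M : nat)
    (P : {poly F}) : Prop :=
  forall l : nat, (l < M)%N ->
    exists U : {poly F}, (size U <= h.+1)%N /\
      forall a : F, (hasse l P).[a] = r a * U.[a].

(* Main.v *)
Require Import Defs.
From HB Require Import structures.
From mathcomp Require Import all_boot all_order all_algebra all_field all_fingroup all_solvable.
From mathcomp Require Import ring zify.
Import Order.TTheory GRing.Theory Num.Theory.
Local Open Scope ring_scope.
Set Implicit Arguments. Unset Strict Implicit. Unset Printing Implicit Defensive.

Definition Tm (F : fieldType) (A : {poly F}) : {poly {poly F}} :=
  \poly_(i < size A) nderivn i A.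

Lemma coef_Tm (F : fieldType) (A : {poly F}) l : (Tm A)`_l = nderivn l A.
Proof.
rewrite coef_poly; case: ltnP => // H; by rewrite nderivn_poly0.
Qed.

Lemma TmE (F : fieldType) (A : {poly F}) :
  Tm A = (map_poly polyC (map_poly polyC A)).[('X)%:P + 'X].
Proof.
rewrite nderiv_taylor; last by exact: mulrC.
rewrite /Tm poly_def !size_map_polyC; apply: eq_bigr => i _.
rewrite !nderivn_map horner_map /= -mul_polyC.
by have -> : forall D : {poly F}, D^:P.['X] = D by move=> D; exact: comp_polyXr.
Qed.

Lemma TmM (F : fieldType) (A B : {poly F}) : Tm (A * B) = Tm A * Tm B.
Proof. by rewrite !TmE !rmorphM /= hornerM. Qed.

Lemma hasseM (F : fieldType) (A B : {poly F}) l :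
  nderivn l (A * B) = \sum_(j < l.+1) nderivn j A * nderivn (l - j) B.
Proof. by rewrite -coef_Tm TmM coefM; apply: eq_bigr => j _; rewrite !coef_Tm. Qed.

Lemma TmXn (F : fieldType) e : Tm ('X^e : {poly F}) = (('X)%:P + 'X) ^+ e.
Proof. by rewrite TmE !map_polyXn hornerXn. Qed.

Lemma pchar_card (F : finFieldType) : [pchar F].-nat #|F|.
Proof.
have [p pr_p pF] := finPcharP F.
have := abelem_pgroup (fin_ring_pchar_abelem pF).
rewrite /pgroup cardsT => H.
by rewrite (eq_pnat _ (pcharf_eq pF)).
Qed.

Lemma TmLam (F : finFieldType) :
  Tm (Lam F) = (Lam F)%:P + map_poly polyC (Lam F).
Proof.
rewrite TmE /Lam !rmorphB /= !map_polyXn !map_polyX hornerD hornerN hornerXn hornerX.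
have Hn : [pchar {poly {poly F}}].-nat #|F|.
  by rewrite (eq_pnat _ (@pchar_poly _)) (eq_pnat _ (@pchar_poly _)) pchar_card.
rewrite exprDn_pchar // -rmorphXn /=.
set a := (_ ^+ _)%:P; set b := ('X : {poly F})%:P; ring.
Qed.

Lemma TmX (F : fieldType) (A : {poly F}) j : Tm (A ^+ j) = Tm A ^+ j.
Proof. by rewrite !TmE !rmorphXn horner_exp. Qed.

Lemma size_MnP (F : fieldType) (p : {poly F}) n : (size (p *+ n) <= size p)%N.
Proof. by rewrite -scaler_nat size_scale_leq. Qed.

Lemma basis_pd (F : finFieldType) j e l :
  (size (pseudoderiv l (Lam F ^+ j * 'X^e)) <= e.+1)%N.
Proof.
rewrite /pseudoderiv /hasse -coef_Tm TmM TmX TmLam.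
set Y := map_poly polyC (Lam F).
set S := \sum_(i < j) ((Lam F)%:P + Y) ^+ (j.-1 - i) * Y ^+ i.
have -> : ((Lam F)%:P + Y) ^+ j = Y ^+ j + (Lam F)%:P * S.
  have := subrXX ((Lam F)%:P + Y) Y j; rewrite addrK -/S => /eqP.
  by rewrite subr_eq => /eqP ->; rewrite addrC.
rewrite mulrDl -mulrA coefD coefCM modpD [Lam F * _]mulrC modp_mull addr0.
apply: leq_trans (leq_modp _ _) _.
rewrite coefM; apply: (big_ind (fun p : {poly F} => (size p <= e.+1)%N)).
- by rewrite size_poly0.
- by move=> p q Hp Hq; apply: leq_trans (size_polyD _ _) _; rewrite geq_max Hp Hq.
move=> a _; rewrite /Y -rmorphXn coef_map /= coef_Tm nderivnXn mul_polyC.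
apply: leq_trans (size_scale_leq _ _) _; apply: leq_trans (size_MnP _ _) _.
by rewrite size_polyXn ltnS leq_subr.
Qed.

Lemma mult_root (F : fieldType) (G : {poly F}) M a :
  (forall l, (l < M)%N -> (nderivn l G).[a] = 0) -> ('X - a%:P) ^+ M %| G.
Proof.
move=> H.
have HG : G = (map_poly polyC G).[a%:P + ('X - a%:P)].
  by rewrite addrC subrK; symmetry; exact: comp_polyXr.
rewrite HG nderiv_taylor; last exact: mulrC.
apply: (big_ind (fun p => ('X - a%:P) ^+ M %| p)).
- exact: dvdp0.
- by move=> p q; exact: dvdp_add.
move=> i _; rewrite nderivn_map horner_map /=.
case: (ltnP i M) => Hi.
  by rewrite H // mul0r dvdp0.
by apply: dvdp_mull; apply: dvdp_exp2l.
Qed.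

Lemma prod_dvd (F : fieldType) (G : {poly F}) M (s : seq F) :
  uniq s -> (forall a, ('X - a%:P) ^+ M %| G) ->
  \prod_(x <- s) ('X - x%:P) ^+ M %| G.
Proof.
move=> + H; elim: s => [|x s IH] /=.
  by rewrite big_nil dvd1p.
case/andP=> xs us; rewrite big_cons Gauss_dvdp ?H ?IH //.
apply: coprimep_expl; rewrite coprimep_sym coprimep_XsubC rootE horner_prod.
rewrite prodf_seq_neq0; apply/allP=> y ys /=.
rewrite horner_exp hornerXsubC expf_neq0 // subr_eq0.
by apply: contraNneq xs => ->.
Qed.

Lemma Lam_dvd (F : finFieldType) (G : {poly F}) M :
  (forall l, (l < M)%N -> forall a, (nderivn l G).[a] = 0) -> Lam F ^+ M %| G.
Proof.
move=> H; rewrite /Lam finField_genPoly -prodrXl.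
apply: prod_dvd; first exact: index_enum_uniq.
by move=> a; apply: mult_root => l Hl; apply: H.
Qed.

Lemma arith (m c h M k : nat) (hm : (0 < m)%N)
  (hcM : (c%:R : rat) < ((m - 1)%:R / m%:R) * M%:R)
  (hk : (k%:R : rat) >
        M%:R / ((m - 1)%:R * M%:R - m%:R * c%:R) * (h + 1)%:R) :
  (m * c < (m - 1) * M)%N /\ (M * (h + 1) < k * ((m - 1) * M - m * c))%N.
Proof.
have H1 : (m * c < (m - 1) * M)%N.
  rewrite -(ltr_nat rat) !natrM.
  move: hcM; rewrite mulrAC ltr_pdivlMr ?ltr0n // => H.
  by rewrite mulrC.
split=> //.
rewrite -(ltr_nat rat) !natrM natrB ?(ltnW H1) // !natrM.
move: hk; rewrite mulrAC ltr_pdivrMr // subr_gt0 -!natrM ltr_nat.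
all: try exact: H1.
Qed.

Lemma count_ineq (m c h M k q : nat) (hq : (1 < q)%N) (hm : (0 < m)%N)
  (H1 : (m * c < (m - 1) * M)%N) (H2 : (M * (h + 1) < k * ((m - 1) * M - m * c))%N) :
  (M * minn (k + h).+1 q < m * (M - c) * minn k.+1 q)%N.
Proof.
case: (leqP k.+1 q) => Hk.
  apply: (@leq_ltn_trans (M * (k + h).+1)); first by rewrite leq_mul2l geq_minl orbT.
  nia.
apply: (@leq_ltn_trans (M * q)); first by rewrite leq_mul2l geq_minr orbT.
nia.
Qed.

Lemma card_gt1 (F : finFieldType) : (1 < #|F|)%N.
Proof. exact: finNzRing_gt1. Qed.

Lemma size_Lam (F : finFieldType) : size (Lam F) = #|F|.+1.
Proof.
rewrite /Lam size_polyDl size_polyXn // size_polyN size_polyX ltnS.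
exact: card_gt1.
Qed.

Lemma Lam_neq0 (F : finFieldType) : Lam F != 0.
Proof. by rewrite -size_poly_eq0 size_Lam. Qed.

Lemma mod_eval (F : finFieldType) (p : {poly F}) a : (p %% Lam F).[a] = p.[a].
Proof.
rewrite {2}(divp_eq p (Lam F)) hornerD hornerM.
by rewrite /Lam hornerD hornerN hornerXn hornerX expf_card subrr mulr0 add0r.
Qed.

Lemma pd_add (F : finFieldType) l (p q : {poly F}) :
  pseudoderiv l (p + q) = pseudoderiv l p + pseudoderiv l q.
Proof. by rewrite /pseudoderiv /hasse nderivnD modpD. Qed.

Lemma pd_scale (F : finFieldType) l a (p : {poly F}) :
  pseudoderiv l (a *: p) = a *: pseudoderiv l p.
Proof. by rewrite /pseudoderiv /hasse nderivnZ modpZl. Qed.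

Lemma pd_zero (F : finFieldType) l : pseudoderiv l (0 : {poly F}) = 0.
Proof. by rewrite /pseudoderiv /hasse raddf0 mod0p. Qed.

Lemma coef_sumX (F : fieldType) K (c : 'I_K -> F) (e0 : 'I_K) :
  (\sum_(e < K) c e *: ('X^e : {poly F}))`_e0 = c e0.
Proof.
rewrite coef_sum (bigD1 e0) //= coefZ coefXn eqxx mulr1 big1 ?addr0 //.
move=> e He; rewrite coefZ coefXn.
by case: eqP => [/val_inj E|_]; [move: He; rewrite E eqxx | rewrite mulr0].
Qed.

Lemma size_sumX (F : fieldType) K (c : 'I_K -> F) :
  (size (\sum_(e < K) c e *: ('X^e : {poly F}))%R <= K)%N.
Proof.
apply: (big_ind (fun p : {poly F} => (size p <= K)%N)).
- by rewrite size_poly0.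
- by move=> p q Hp Hq; apply: leq_trans (size_polyD _ _) _; rewrite geq_max Hp Hq.
move=> e _; apply: leq_trans (size_scale_leq _ _) _.
by rewrite size_polyXn ltn_ord.
Qed.

Lemma indep (F : finFieldType) J (B : nat -> {poly F}) :
  (forall j, (size (B j) <= #|F|)%N) ->
  \sum_(j < J) Lam F ^+ j * B j = 0 -> forall j, (j < J)%N -> B j = 0.
Proof.
elim: J B => [|J IH] B HB H j Hj //.
move: H; rewrite big_ord_recl /= expr0 mul1r.
under eq_bigr => i _ do rewrite /bump /= add1n exprS -mulrA.
rewrite -mulr_sumr => H.
set S := \sum_(i < J) _ in H.
have HS : S = 0.
  apply/eqP; apply: contraT => nS.
  have HB0 : B 0%N = - (Lam F * S) by apply/eqP; rewrite -addr_eq0 H.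
  have := HB 0%N; rewrite HB0 size_polyN size_mul ?Lam_neq0 // size_Lam.
  have : (0 < size S)%N by rewrite size_poly_gt0.
  move=> _; rewrite addSn /= -[X in (_ <= X)%N]addn0 leq_add2l leqn0 size_poly_eq0 (negbTE nS) //.
have HB0 : B 0%N = 0 by rewrite -H HS mulr0 addr0.
case: j Hj => [|j] Hj //.
exact: (IH (fun i => B i.+1)).
Qed.

Lemma pd_opp (F : finFieldType) l (p : {poly F}) :
  pseudoderiv l (- p) = - pseudoderiv l p.
Proof. by rewrite /pseudoderiv /hasse nderivnN modpN. Qed.

Unset Implicit Arguments. Set Strict Implicit. Set Printing Implicit Defensive.

Theorem lemma5p6 (F : finFieldType) (m c h M : nat)
  (hm : (0 < m)%N) (hc : (0 < c)%N) (hh : (0 < h)%N) (hM : (0 < M)%N)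
  (hcM : (c%:R : rat) < ((m - 1)%:R / m%:R) * M%:R)
  (r : F -> F) (Fs : 'I_m -> {poly F})
  (hdegF : forall i, (size (Fs i) <= c * #|F|)%N)
  (htw : forall i, twisted_pseudopoly r h M (Fs i))
  (k : nat)
  (hk : (k%:R : rat) >
        M%:R / ((m - 1)%:R * M%:R - m%:R * c%:R) * (h + 1)%:R) :
  exists A : 'I_m -> {poly F},
    (forall i, is_pseudopoly k (A i)) /\
    (forall i, (size (A i) <= M * #|F|)%N) /\
    (exists i, A i != 0) /\
    \sum_(i < m) A i * Fs i = 0.
Proof.
have [H1 H2] := arith hm hcM hk.
have hq : (1 < #|F|)%N := card_gt1 F.
have Hcnt := count_ineq hq hm H1 H2.
set q := #|F| in hq Hcnt hdegF *.
have hcM' : (c < M)%N by nia.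
set J := (M - c)%N in Hcnt *.
set K := minn k.+1 q in Hcnt *.
set D := minn (k + h).+1 q in Hcnt *.
have /fin_all_exists [U HU] : forall x : 'I_m * 'I_M, exists U : {poly F},
   (size U <= h.+1)%N /\ forall a, (hasse x.2 (Fs x.1)).[a] = r a * U.[a].
  by move=> [i l]; exact: htw i l (ltn_ord l).
pose Un (i : 'I_m) (b : nat) : {poly F} :=
  if insub b is Some b' then U (i, b') else 0.
have HUn : forall i b, (b < M)%N -> (size (Un i b) <= h.+1)%N /\
    forall a, (hasse b (Fs i)).[a] = r a * (Un i b).[a].
  by move=> i b Hb; rewrite /Un insubT /=; exact: (HU (i, Ordinal Hb)).
pose Bs (u : {ffun 'I_m * 'I_J * 'I_K -> F}) (i : 'I_m) (j : 'I_J) : {poly F} :=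
  \sum_(e < K) u (i, j, e) *: 'X^e.
pose Af (u : {ffun 'I_m * 'I_J * 'I_K -> F}) (i : 'I_m) : {poly F} :=
  \sum_(j < J) Lam F ^+ j * Bs u i j.
pose Vl u (l : nat) := \sum_(i < m) \sum_(a < l.+1)
   pseudoderiv a (Af u i) * Un i (l - a)%N.
pose fm u : {ffun 'I_M * 'I_D -> F} := [ffun p : 'I_M * 'I_D => (Vl u (val p.1) %% Lam F)`_(val p.2)].
have HP1 : forall u i, is_pseudopoly k (Af u i).
  move=> u i l; rewrite /Af.
  apply: (big_ind (fun p => (size (pseudoderiv l p) <= k.+1)%N)).
  - by rewrite pd_zero size_poly0.
  - move=> p1 p2 Hp1 Hp2; rewrite pd_add.
    by apply: leq_trans (size_polyD _ _) _; rewrite geq_max Hp1 Hp2.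
  move=> j _; rewrite /Bs mulr_sumr.
  apply: (big_ind (fun p => (size (pseudoderiv l p) <= k.+1)%N)).
  - by rewrite pd_zero size_poly0.
  - move=> p1 p2 Hp1 Hp2; rewrite pd_add.
    by apply: leq_trans (size_polyD _ _) _; rewrite geq_max Hp1 Hp2.
  move=> e _; rewrite -scalerAr pd_scale.
  apply: leq_trans (size_scale_leq _ _) _; apply: leq_trans (basis_pd _ _ _ _) _.
  by apply: leq_trans (ltn_ord e) _; rewrite geq_minl.
have HP2 : forall u i, (size (Af u i) <= J * q)%N.
  move=> u i; rewrite /Af.
  apply: (big_ind (fun p : {poly F} => (size p <= J * q)%N)).
  - by rewrite size_poly0.
  - by move=> p1 p2 Hp1 Hp2; apply: leq_trans (size_polyD _ _) _; rewrite geq_max Hp1 Hp2.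
  move=> j _; apply: leq_trans (size_polyMleq _ _) _.
  have Ha := size_poly_exp_leq (Lam F) j; rewrite size_Lam /= in Ha.
  have Hb : (size (Bs u i j) <= q)%N.
    by apply: leq_trans (size_sumX _) _; rewrite geq_minr.
  have Hj := ltn_ord j.
  rewrite -/q in Ha; have Hjq : (q * j.+1 <= q * J)%N by rewrite leq_mul2l Hj orbT.
  rewrite mulnC; rewrite mulnS in Hjq; move: Ha Hb Hjq; move: (size _) (size _) => x y; clear; lia.
have HP3 : forall u v i, Af (u - v) i = Af u i - Af v i.
  move=> u v i; rewrite /Af -sumrB; apply: eq_bigr => j _.
  rewrite -mulrBr /Bs -sumrB; congr (_ * _); apply: eq_bigr => e _.
  by rewrite -scalerBl !ffunE.
have HVl : forall u v l, Vl (u - v) l = Vl u l - Vl v l.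
  move=> u v l; rewrite /Vl -sumrB; apply: eq_bigr => i _.
  rewrite -sumrB; apply: eq_bigr => a _.
  by rewrite HP3 pd_add pd_opp mulrBl.
have Hfm : forall u v, fm (u - v) = fm u - fm v.
  move=> u v; apply/ffunP => p; rewrite !ffunE HVl modpD modpN coefD coefN.
  done.
have HVsize : forall u (l : nat), (l < M)%N -> (size (Vl u l %% Lam F)%R <= D)%N.
  move=> u l Hl; rewrite leq_min; apply/andP; split.
    apply: leq_trans (leq_modp _ _) _; rewrite /Vl.
    apply: (big_ind (fun p : {poly F} => (size p <= (k + h).+1)%N)).
    - by rewrite size_poly0.
    - by move=> p1 p2 Hp1 Hp2; apply: leq_trans (size_polyD _ _) _; rewrite geq_max Hp1 Hp2.
    move=> i _.
    apply: (big_ind (fun p : {poly F} => (size p <= (k + h).+1)%N)).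
    - by rewrite size_poly0.
    - by move=> p1 p2 Hp1 Hp2; apply: leq_trans (size_polyD _ _) _; rewrite geq_max Hp1 Hp2.
    move=> a _; apply: leq_trans (size_polyMleq _ _) _.
    have Hp := HP1 u i a.
    have [Hs _] := HUn i (l - a)%N (leq_ltn_trans (leq_subr _ _) Hl).
    move: Hp Hs; move: (size _) (size _) => x y; clear; lia.
  by rewrite -ltnS -size_Lam ltn_modp Lam_neq0.
have Hzero : forall u, fm u = 0 -> forall l, (l < M)%N -> Vl u l %% Lam F = 0.
  move=> u Hu l Hl; apply/polyP => d; rewrite coef0.
  case: (ltnP d D) => Hd.
    have := congr1 (fun f : {ffun 'I_M * 'I_D -> F} => f (Ordinal Hl, Ordinal Hd)) Hu.
    by rewrite !ffunE.
  by rewrite nth_default // (leq_trans (HVsize u l Hl) Hd).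
have HG : forall u, (forall l, (l < M)%N -> Vl u l %% Lam F = 0) ->
    \sum_(i < m) Af u i * Fs i = 0.
  move=> u HV; set G := \sum_(i < m) Af u i * Fs i.
  have HdG : Lam F ^+ M %| G.
    apply: Lam_dvd => l Hl a.
    have -> : nderivn l G = \sum_(i < m) nderivn l (Af u i * Fs i) by exact: raddf_sum.
    transitivity (r a * (Vl u l).[a]); last by rewrite -mod_eval HV // horner0 mulr0.
    rewrite horner_sum /Vl horner_sum mulr_sumr; apply: eq_bigr => i _.
    rewrite hasseM !horner_sum mulr_sumr; apply: eq_bigr => j _.
    have [_ He] := HUn i (l - j)%N (leq_ltn_trans (leq_subr _ _) Hl).
    rewrite !hornerM /pseudoderiv mod_eval.
    by have := He a; rewrite /hasse => ->; rewrite mulrCA.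
  apply/eqP; apply: contraT => nG.
  have := dvdp_leq nG HdG.
  have Hs := size_exp (Lam F) M; rewrite size_Lam /= in Hs.
  have HsG : (size G <= (J * q + c * q).-1)%N.
    rewrite /G; apply: (big_ind (fun p : {poly F} => (size p <= (J * q + c * q).-1)%N)).
    - by rewrite size_poly0.
    - by move=> p1 p2 Hp1 Hp2; apply: leq_trans (size_polyD _ _) _; rewrite geq_max Hp1 Hp2.
    move=> i _; apply: leq_trans (size_polyMleq _ _) _.
    have := HP2 u i; have := hdegF i.
    move: (size _) (size _) => x y; clear; lia.
  have HJ : (J * q + c * q = M * q)%N by rewrite -mulnDl /J subnK // ltnW.
  rewrite HJ in HsG; rewrite -/q in Hs.
  move: HsG Hs; move: (size _) (size _) => x y; clear -hq hM; nia.
have [w Hw] : exists w : {ffun 'I_m * 'I_J * 'I_K -> F}, (w != 0) && (fm w == 0).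
  case: (pickP (fun w : {ffun 'I_m * 'I_J * 'I_K -> F} => (w != 0) && (fm w == 0))) => [w Hw|Hn]; first by exists w.
  exfalso.
  have inj : injective fm.
    move=> u v Huv; apply/eqP; rewrite -subr_eq0.
    by have := Hn (u - v); rewrite Hfm Huv subrr eqxx andbT => /negbFE.
  have := leq_card fm inj; rewrite !card_ffun !card_prod !card_ord -/q.
  by rewrite leqNgt ltn_exp2l // Hcnt.
case/andP: Hw => nw /eqP fw.
exists (Af w); split; first exact: HP1.
split; first by move=> i; apply: leq_trans (HP2 w i) _; rewrite leq_mul2r leq_subr orbT.
split; last by apply: HG; apply: Hzero.
case: (pickP (fun i => Af w i != 0)) => [i Hi|Hn]; first by exists i.
exfalso; move/negP: nw; apply; apply/eqP/ffunP => [[[i j] e]].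
rewrite ffunE.
have HA : Af w i = 0 by apply/eqP; move/negbFE: (Hn i).
pose Bn (jn : nat) : {poly F} := if insub jn is Some j' then Bs w i j' else 0.
have HB : forall jn, (size (Bn jn) <= q)%N.
  move=> jn; rewrite /Bn; case: insub => [j'|]; last by rewrite size_poly0.
  by apply: leq_trans (size_sumX _) _; rewrite geq_minr.
have HS : \sum_(j0 < J) Lam F ^+ j0 * Bn j0 = 0.
  transitivity (Af w i); last exact: HA.
  rewrite /Af; apply: eq_bigr => j0 _; by rewrite /Bn valK.
have := indep HB HS (ltn_ord j).
rewrite /Bn valK => HBj.
by have := coef_sumX (fun e0 => w (i, j, e0)) e; rewrite -/(Bs w i j) HBj coef0.
Qed.
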